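(* Let $X,X_1,X_2,\dots$ be random variables in a sub-linear expectation space $(\Omega,\mathscr H,\hat{\mathbb E})$ with $\{X_n\}$ independent, $X_n\overset d=X$ for all $n$, and $\hat{\mathbb E}[X]=\hat{\mathcal E}[X]=0$. Let $V_n^2=\sum_{i=1}^nX_i^2$, $l(x)=\hat{\mathbb E}[X^2\wedge x^2]$, and assume: (I) $\mathbb V(|X|\ge x)=o(x^{-2}l(x))$ as $x\to\infty$; (II) $\limsup_{x\to\infty}\hat{\mathbb E}[X^2\wedge x^2]/\hat{\mathcal E}[X^2\wedge x^2]<r^2$ for some $0<r<\infty$; (III) $\hat{\mathbb E}[(|X|-c)^+]\to0$ as $c\to\infty$; (IV) $x_n\to\infty$ and $x_n=o(\sqrt n)$. Let $b_0=\inf\{x\ge0:l(x)>0\}$ and $z_n=\inf\{s\ge b_0+1: l(s)/s^2\le x_n^2/n\}$. Then for every $0<\delta<r^{-2}$ and all sufficiently large $n$, $$\mathbb V\big(V_n^2\le\delta nl(z_n)\big)\le\exp\{-2x_n^2\}.$$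
   Context: Sub-linear expectation space: $\mathscr H$ is a linear space of real functions on a measurable space $(\Omega,\mathcal F)$, closed under $\varphi(X_1,\dots,X_n)$ for $\varphi$ bounded continuous or locally Lipschitz with polynomial growth; $\hat{\mathbb E}:\mathscr H\to[-\infty,\infty]$ is monotone, constant preserving, sub-additive and positively homogeneous. $\hat{\mathcal E}[X]=-\hat{\mathbb E}[-X]$; $\mathbb V(A)=\inf\{\hat{\mathbb E}[\xi]:I_A\le\xi,\xi\in\mathscr H\}$. Independence: $\mathbf Y$ is independent of $\mathbf X$ if $\hat{\mathbb E}[\varphi(\mathbf X,\mathbf Y)]=\hat{\mathbb E}[\hat{\mathbb E}[\varphi(\mathbf x,\mathbf Y)]|_{\mathbf x=\mathbf X}]$ for all locally Lipschitz $\varphi$ of polynomial growth (whenever the relevant expectations are finite); $\{X_n\}$ is independent if $X_{i+1}$ is independent of $(X_1,\dots,X_i)$ for each $i$. $X_n\overset d=X$ means $\hat{\mathbb E}[\varphi(X_n)]=\hat{\mathbb E}[\varphi(X)]$ for all such $\varphi$. $a\wedge b=\min(a,b)$. *)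

(* Defs.v *)
From HB Require Import structures.
From mathcomp Require Import all_boot all_order all_algebra.
From mathcomp Require Import all_classical all_reals all_analysis.
Set Implicit Arguments. Unset Strict Implicit. Unset Printing Implicit Defensive.
Import Order.TTheory GRing.Theory Num.Theory.
Import numFieldNormedType.Exports.
Local Open Scope classical_set_scope.
Local Open Scope ring_scope.

Definition locLip (R : realType) (V : normedModType R) (phi : V -> R) : Prop :=
  exists (C : R) (m : nat), forall x y : V,
    `|phi x - phi y| <= C * (1 + `|x| ^+ m + `|y| ^+ m) * `|x - y|.

Definition bdd_cont (R : realType) (V : normedModType R) (phi : V -> R) : Prop :=
  continuous phi /\ exists M : R, forall x, `|phi x| <= M.

Definition rvec (R : realType) (Omega : Type) (n : nat)
  (X : 'I_n -> Omega -> R) (w : Omega) : 'rV[R]_n := \row_i X i w.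

(* (Omega, H, E) is a sub-linear expectation space.  E is a total map on
   Omega -> R, but all its axioms only concern elements of H. *)
Record sublinear_space (R : realType) (Omega : Type) (H : set (Omega -> R))
    (E : (Omega -> R) -> \bar R) : Prop := {
  H_zero : H (fun _ => 0);
  H_add : forall X Y, H X -> H Y -> H (fun w => X w + Y w);
  H_scale : forall (c : R) X, H X -> H (fun w => c * X w);
  H_comp : forall (n : nat) (X : 'I_n -> Omega -> R) (phi : 'rV[R]_n -> R),
    (forall i, H (X i)) -> bdd_cont phi \/ locLip phi ->
    H (fun w => phi (rvec X w));
  E_mono : forall X Y, H X -> H Y -> (forall w, X w <= Y w) -> (E X <= E Y)%E;
  E_cst : forall c : R, E (fun _ => c) = c%:E;
  E_subadd : forall X Y, H X -> H Y -> (E X +? E Y)%E ->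
    (E (fun w => (X w + Y w)%R) <= E X + E Y)%E;
  E_homog : forall (l : R) X, 0 < l -> H X -> E (fun w => (l * X w)%R) = (l%:E * E X)%E
}.

Definition Elow (R : realType) (Omega : Type) (E : (Omega -> R) -> \bar R)
  (X : Omega -> R) : \bar R := (- E (fun w => (- X w)%R))%E.

Definition capV (R : realType) (Omega : Type) (H : set (Omega -> R))
  (E : (Omega -> R) -> \bar R) (A : set Omega) : \bar R :=
  ereal_inf [set E xi | xi in [set xi | H xi /\ forall w, \1_A w <= xi w]].

Definition indep_of (R : realType) (Omega : Type) (H : set (Omega -> R))
  (E : (Omega -> R) -> \bar R) (n : nat) (Y : Omega -> R)
  (X : 'I_n -> Omega -> R) : Prop :=
  forall phi : 'rV[R]_(n + 1) -> R, locLip phi ->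
    let psi := fun x : 'rV[R]_n => E (fun w => phi (row_mx x (\row_(j < 1) Y w))) in
    (forall x, psi x \is a fin_num) ->
    H (fun w => fine (psi (rvec X w))) ->
    E (fun w => phi (row_mx (rvec X w) (\row_(j < 1) Y w)))
      = E (fun w => fine (psi (rvec X w))).

Definition indep_seq (R : realType) (Omega : Type) (H : set (Omega -> R))
  (E : (Omega -> R) -> \bar R) (Xs : nat -> Omega -> R) : Prop :=
  forall i : nat, indep_of H E (Xs i) (fun j : 'I_i => Xs (nat_of_ord j)).

Definition ident_distr (R : realType) (Omega : Type)
  (E : (Omega -> R) -> \bar R) (X Y : Omega -> R) : Prop :=
  forall phi : R -> R, locLip phi -> E (phi \o X) = E (phi \o Y).

(* Main.v *)
Require Import Defs.
From HB Require Import structures.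
From mathcomp Require Import all_boot all_order all_algebra.
From mathcomp Require Import all_classical all_reals all_analysis.
From mathcomp Require Import ring lra.
Import Order.TTheory GRing.Theory Num.Theory.
Import numFieldNormedType.Exports.
Local Open Scope classical_set_scope.
Local Open Scope ring_scope.
Set Implicit Arguments. Unset Strict Implicit. Unset Printing Implicit Defensive.

Lemma entry_le_norm (R : realType) n (v : 'rV[R]_n) i : `|v 0 i| <= `|v|.
Proof.
have -> : `|v| = mx_norm v by [].
rewrite mx_normrE.
exact: (le_bigmax 0 (fun ij : 'I_1 * 'I_n => `|v ij.1 ij.2|) (0, i)).
Qed.

Definition lip1 (R : realType) (phi : R -> R) (K : R) :=
  0 <= K /\ forall x y, `|phi x - phi y| <= K * (`|x| + `|y|) * `|x - y|.

Lemma lip1_locLip (R : realType) (phi : R -> R) K : lip1 phi K -> locLip phi.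
Proof.
move=> [K0 HK]; exists K, 1%N => x y.
apply: (le_trans (HK x y)); rewrite !expr1.
apply: ler_wpM2r => //; apply: ler_wpM2l => //; lra.
Qed.

Section SL.
Variables (R : realType) (Omega : Type) (H : set (Omega -> R))
  (E : (Omega -> R) -> \bar R).
Hypothesis SL : sublinear_space H E.

Lemma Hcst c : H (fun _ => c).
Proof.
have := @H_comp _ _ _ _ SL 0 (fun i => fun _ => 0) (fun _ : 'rV[R]_0 => c).
apply; first by case.
left; split; first exact: cst_continuous.
by exists `|c|.
Qed.

Lemma H_lip f phi K : H f -> lip1 phi K -> H (fun w => phi (f w)).
Proof.
move=> Hf [K0 HK].
have := @H_comp _ _ _ _ SL 1 (fun i => f) (fun v : 'rV[R]_1 => phi (v 0 0)).
rewrite /rvec /=.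
have -> : (fun w => phi ((\row_i f w : 'rV[R]_1) 0 0)) = (fun w => phi (f w)).
  by apply: funext => w; rewrite mxE.
apply; first by [].
right; exists K, 1%N => x y.
apply: (le_trans (HK _ _)); rewrite !expr1.
have h1 := entry_le_norm x 0; have h2 := entry_le_norm y 0.
have h3 : `|x 0 0 - y 0 0| <= `|x - y| by have := entry_le_norm (x - y) 0; rewrite !mxE.
apply: ler_pM; [|by []| |by []].
  by apply: mulr_ge0 => //; apply: addr_ge0.
apply: ler_pM => //.
lra.
Qed.

Lemma H_opp f : H f -> H (fun w => - f w).
Proof.
move=> Hf; have := H_scale SL (-1) Hf.
by have -> : (fun w => -1 * f w) = (fun w => - f w) by apply: funext => w; rewrite mulN1r.
Qed.

Lemma E_bdd f a b : H f -> (forall w, a <= f w <= b) -> (a%:E <= E f <= b%:E)%E.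
Proof.
move=> Hf hab; apply/andP; split.
  rewrite -(E_cst SL a); apply: (E_mono SL) => //; [exact: Hcst|by move=> w; case/andP: (hab w)].
rewrite -(E_cst SL b); apply: (E_mono SL) => //; [exact: Hcst|by move=> w; case/andP: (hab w)].
Qed.

Lemma E_bdd_fin f a b : H f -> (forall w, a <= f w <= b) -> E f \is a fin_num.
Proof.
move=> Hf /(E_bdd Hf) /andP[].
by case: (E f).
Qed.

End SL.

Lemma prod_le1 (R : realType) n (a : 'I_n -> R) : (forall i, `|a i| <= 1) -> `|\prod_i a i| <= 1.
Proof.
move=> ha; rewrite normr_prod; apply: prodr_ile1 => i _; by rewrite normr_ge0 ha.
Qed.

Lemma prod_diff (R : realType) n (a b : 'I_n -> R) :
  (forall i, `|a i| <= 1) -> (forall i, `|b i| <= 1) ->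
  `|\prod_i a i - \prod_i b i| <= \sum_i `|a i - b i|.
Proof.
elim: n a b => [|n IH] a b ha hb; first by rewrite !big_ord0 subrr normr0.
rewrite !big_ord_recr /=.
set A := \prod_(i < n) a (widen_ord (leqnSn n) i).
set B := \prod_(i < n) b (widen_ord (leqnSn n) i).
have hA : `|A - B| <= \sum_(i < n) `|a (widen_ord (leqnSn n) i) - b (widen_ord (leqnSn n) i)|.
  by apply: IH => i.
have hB : `|B| <= 1 by apply: prod_le1 => i.
have e : A * a ord_max - B * b ord_max = (A - B) * a ord_max + B * (a ord_max - b ord_max) by ring.
rewrite e; apply: (le_trans (ler_normD _ _)); rewrite !normrM.
apply: lerD.
  rewrite -[X in _ <= X]mulr1; apply: ler_pM => //; exact: ha.
rewrite -[X in _ <= X]mul1r; apply: ler_pM => //.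
Qed.

Section SL2.
Variables (R : realType) (Omega : Type) (H : set (Omega -> R))
  (E : (Omega -> R) -> \bar R).
Hypothesis SL : sublinear_space H E.

Lemma G_locLip n (h : R -> R) K : lip1 h K -> (forall x, `|h x| <= 1) ->
  locLip (fun v : 'rV[R]_n => \prod_i h (v 0 i)).
Proof.
move=> [K0 HK] h1; exists (n%:R * K), 1%N => v w.
apply: (le_trans (prod_diff _ _)) => //.
rewrite !expr1.
have -> : n%:R * K * (1 + `|v| + `|w|) * `|v - w| = \sum_(i < n) (K * (1 + `|v| + `|w|) * `|v - w|).
  by rewrite sumr_const card_ord -mulr_natl; ring.
apply: ler_sum => i _.
apply: (le_trans (HK _ _)).
have h1' := entry_le_norm v i; have h2 := entry_le_norm w i.
have h3 : `|v 0 i - w 0 i| <= `|v - w| by have := entry_le_norm (v - w) i; rewrite !mxE.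
apply: ler_pM => //.
  by apply: mulr_ge0 => //; apply: addr_ge0.
apply: ler_pM => //; lra.
Qed.

Lemma H_G n (X : 'I_n -> Omega -> R) h K : (forall i, H (X i)) -> lip1 h K ->
  (forall x, `|h x| <= 1) -> H (fun w => \prod_i h (X i w)).
Proof.
move=> HX hK h1.
have := @H_comp _ _ _ _ SL n X (fun v : 'rV[R]_n => \prod_i h (v 0 i)) HX (or_intror (G_locLip n hK h1)).
rewrite /rvec.
have -> : (fun w => \prod_i h ((\row_i X i w : 'rV[R]_n) 0 i)) = (fun w => \prod_i h (X i w)).
  by apply: funext => w; apply: eq_bigr => i _; rewrite mxE.
by [].
Qed.

End SL2.

Section SL3.
Variables (R : realType) (Omega : Type) (H : set (Omega -> R))
  (E : (Omega -> R) -> \bar R).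
Hypothesis SL : sublinear_space H E.

Lemma E_add_fin f g : H f -> H g -> E f \is a fin_num -> E g \is a fin_num ->
  (E (fun w => (f w + g w)%R) <= E f + E g)%E.
Proof.
move=> Hf Hg ff fg; apply: (E_subadd SL) => //; exact: fin_num_adde_defl.
Qed.

Lemma Elow_le f : H f -> E f \is a fin_num -> E (fun w => - f w) \is a fin_num ->
  (Elow E f <= E f)%E.
Proof.
move=> Hf ff fg.
have h0 : (E (fun w => (f w + - f w)%R) <= E f + E (fun w => (- f w)%R))%E.
  exact: (E_add_fin Hf (H_opp SL Hf) ff fg).
rewrite (_ : (fun w => (f w + - f w)%R) = (fun _ => 0%R)) in h0; last by apply: funext => w; rewrite subrr.
rewrite (E_cst SL) in h0.
rewrite /Elow; move: ff fg h0; rewrite !fin_numE.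
case: (E f) => // a _; case: (E (fun w => - f w)) => // b _.
rewrite -EFinD /= lee_fin => ?; rewrite lee_fin; lra.
Qed.

Lemma L_cap f g (b : R) (A : set Omega) : H f -> H g -> 0 < b ->
  E f \is a fin_num -> E g \is a fin_num ->
  (forall w, f w <= g w + b * \1_A w) ->
  (E f <= E g + b%:E * capV H E A)%E.
Proof.
move=> Hf Hg b0 ff fg hfg.
have key : (((fine (E f) - fine (E g)) / b)%:E <= capV H E A)%E.
  apply: le_ereal_inf_tmp => y [xi [Hxi hxi] <-].
  have h1 : (E f <= E (fun w => (g w + b * xi w)%R))%E.
    apply: (E_mono SL) => //.
      by apply: (H_add SL) => //; apply: (H_scale SL).
    move=> w; apply: (le_trans (hfg w)); rewrite lerD2l; apply: ler_wpM2l; [exact: ltW|exact: hxi].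
  have h2 : (E (fun w => (g w + b * xi w)%R) <= E g + E (fun w => (b * xi w)%R))%E.
    apply: (E_subadd SL) => //; first exact: (H_scale SL).
    exact: fin_num_adde_defr.
  rewrite (E_homog SL) // in h2.
  have h3 := le_trans h1 h2.
  move: ff fg h3; rewrite !fin_numE.
  case: (E f) => // a _; case: (E g) => // c _.
  case: (E xi) => [r||] /=.
  - rewrite -EFinM -EFinD !lee_fin => h.
    rewrite ler_pdivrMr //; lra.
  - by rewrite leey.
  - by rewrite mulrNy gtr0_sg // mul1e addeNy leeNy_eq.
have -> : E f = (fine (E g))%:E + ((fine (E f) - fine (E g)) / b * b)%:E.
  by rewrite divfK ?gt_eqF // -EFinD addrC subrK fineK.
rewrite fineK // leeD2l // EFinM muleC.
by apply: lee_wpmul2l => //; rewrite lee_fin ltW.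
Qed.

End SL3.

Lemma prod_split (R : realType) n (h : R -> R) (x : 'rV[R]_n) (y : R) :
  \prod_(i < n + 1) h ((row_mx x (\row_(j < 1) y)) 0 i) = (\prod_(i < n) h (x 0 i)) * h y.
Proof.
rewrite big_split_ord /= big_ord1; congr (_ * _).
  by apply: eq_bigr => i _; rewrite row_mxEl.
by rewrite row_mxEr mxE.
Qed.

Section SL4.
Variables (R : realType) (Omega : Type) (H : set (Omega -> R))
  (E : (Omega -> R) -> \bar R).
Hypothesis SL : sublinear_space H E.

Lemma indep_use n (Y : Omega -> R) (X : 'I_n -> Omega -> R) (phi : 'rV[R]_(n + 1) -> R) :
  indep_of H E Y X -> locLip phi -> forall psi : 'rV[R]_n -> \bar R,
  (forall x, E (fun w => phi (row_mx x (\row_(j < 1) Y w))) = psi x) ->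
  (forall x, psi x \is a fin_num) -> H (fun w => fine (psi (rvec X w))) ->
  E (fun w => phi (row_mx (rvec X w) (\row_(j < 1) Y w))) = E (fun w => fine (psi (rvec X w))).
Proof.
move=> I Hl psi Hpsi.
have -> : psi = (fun x => E (fun w => phi (row_mx x (\row_(j < 1) Y w)))).
  by apply: funext => x; rewrite Hpsi.
exact: I.
Qed.

Lemma E_prod (Xs : nat -> Omega -> R) (h : R -> R) K (c : R) :
  (forall i, H (Xs i)) -> indep_seq H E Xs -> lip1 h K ->
  (forall x, `|h x| <= 1) -> (forall x, 0 < h x) -> 0 < c ->
  (forall i, E (fun w => h (Xs i w)) = c%:E) ->
  forall n, E (fun w => \prod_(i < n) h (Xs i w)) = (c ^+ n)%:E.
Proof.
move=> HXs Hind hK h1 hpos c0 hc.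
elim=> [|n IH].
  have -> : (fun w => \prod_(i < 0) h (Xs i w)) = (fun _ => 1) by apply: funext => w; rewrite big_ord0.
  by rewrite (E_cst SL) expr0.
pose phi := fun v : 'rV[R]_(n + 1) => \prod_i h (v 0 i).
have Hl : locLip phi by exact: (G_locLip (n + 1) hK h1).
pose psi := fun x : 'rV[R]_n => ((\prod_i h (x 0 i)) * c)%:E.
have Hpsi : forall x, E (fun w => phi (row_mx x (\row_(j < 1) Xs n w))) = psi x.
  move=> x; rewrite /phi /psi.
  have -> : (fun w => \prod_(i < n + 1) h ((row_mx x (\row_(j < 1) Xs n w)) 0 i))
     = (fun w => (\prod_(i < n) h (x 0 i)) * h (Xs n w)).
    by apply: funext => w; rewrite prod_split.
  rewrite (E_homog SL); [by rewrite hc -EFinM | by apply: prodr_gt0 => i _ |].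
  exact: (H_lip SL (HXs n) hK).
have HF : H (fun w => \prod_(i < n) h (Xs i w)).
  exact: (@H_G R Omega H E SL n (fun i : 'I_n => Xs i) h K (fun i => HXs i) hK h1).
have e := @indep_use n (Xs n) (fun j : 'I_n => Xs j) phi (Hind n) Hl psi Hpsi.
have eF : (fun w => fine (psi (rvec (fun j : 'I_n => Xs j) w))) = (fun w => c * \prod_(i < n) h (Xs i w)).
  apply: funext => w; rewrite /psi /= mulrC; congr (_ * _).
  by apply: eq_bigr => i _; rewrite /rvec mxE.
rewrite eF in e.
have eL : (fun w => phi (row_mx (rvec (fun j : 'I_n => Xs j) w) (\row_(j < 1) Xs n w)))
    = (fun w => \prod_(i < n.+1) h (Xs i w)).
  apply: funext => w; rewrite /phi prod_split big_ord_recr /=; congr (_ * _).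
  by apply: eq_bigr => i _; rewrite /rvec mxE.
rewrite eL in e.
rewrite e; last first.
- by apply: (H_scale SL).
- by move=> x.
by rewrite (E_homog SL) // IH -EFinM exprS.
Qed.

End SL4.

Lemma min_lip (R : realType) (a b m : R) : `|Num.min a m - Num.min b m| <= `|a - b|.
Proof.
have n1 : a - b <= `|a - b| := ler_norm _.
have n2 : b - a <= `|a - b| by rewrite distrC; exact: ler_norm.
rewrite ler_norml.
have [ha|ha] := leP a m; have [hb|hb] := leP b m;
  rewrite ?(min_l ha) ?(min_r (ltW ha)) ?(min_l hb) ?(min_r (ltW hb)); apply/andP; split; lra.
Qed.

Lemma expN_lip (R : realType) (u v : R) : 0 <= u -> 0 <= v ->
  `|expR (- u) - expR (- v)| <= `|u - v|.
Proof.
wlog uv : u v / u <= v.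
  move=> W u0 v0; have [h|h] := leP u v; first exact: W.
  by rewrite distrC (distrC u); apply: W => //; exact: ltW.
move=> u0 v0.
have e1 : expR (- v) <= expR (- u) by rewrite ler_expR lerN2.
rewrite ger0_norm ?subr_ge0 // ler0_norm ?subr_le0 // opprB.
have -> : expR (- v) = expR (- u) * expR (- (v - u)) by rewrite -expRD; congr expR; ring.
have h1 : 1 - (v - u) <= expR (- (v - u)) by have := expR_ge1Dx (- (v - u)).
have h2 : expR (- u) <= 1 by rewrite -expR0 ler_expR lerNl oppr0.
have h3 : 0 < expR (- u) := expR_gt0 _.
have h4 : 0 <= v - u by rewrite subr_ge0.
nra.
Qed.

Lemma expN_quad (R : realType) (u : R) : 0 <= u -> expR (- u) <= 1 - u + u ^+ 2.
Proof.
move=> u0.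
have h1 : 1 + u / 2 <= expR (u / 2) := expR_ge1Dx _.
have h2 : (1 + u / 2) * (1 + u / 2) <= expR u.
  have -> : expR u = expR (u / 2) * expR (u / 2) by rewrite -expRD; congr expR; field.
  by apply: ler_pM => //; lra.
have h3 : 0 < expR u := expR_gt0 _.
rewrite expRN -[X in X <= _]mul1r ler_pdivrMr //.
have h4 : 0 < 1 - u + u ^+ 2 by nra.
apply: (le_trans _ (ler_wpM2l (ltW h4) h2)).
nra.
Qed.

Lemma pw_bound (R : realType) (t eps y s : R) : 0 < t -> 0 <= y ->
  y ^+ 2 <= eps ^+ 2 * y + s ->
  expR (- (t * y)) <= 1 + (t - t ^+ 2 * eps ^+ 2) * (- y) + t ^+ 2 * s.
Proof.
move=> t0 y0 hy.
apply: (le_trans (expN_quad _)); first exact: mulr_ge0 (ltW t0) y0.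
have : t ^+ 2 * y ^+ 2 <= t ^+ 2 * (eps ^+ 2 * y + s) by apply: ler_wpM2l; [exact: sqr_ge0|].
rewrite !expr2 => h; rewrite !expr2 in hy; nra.
Qed.

Definition hfun (R : realType) (t z x : R) : R :=
  expR (- (t * (Num.min (x ^+ 2) (z ^+ 2) / z ^+ 2))).

Lemma sq_lip (R : realType) (z : R) : lip1 (fun x : R => Num.min (x ^+ 2) (z ^+ 2)) 1.
Proof.
split=> // x y; apply: (le_trans (min_lip _ _ _)).
rewrite mul1r.
have -> : x ^+ 2 - y ^+ 2 = (x + y) * (x - y) by ring.
rewrite normrM; apply: ler_wpM2r => //; exact: ler_normD.
Qed.

Lemma Y_bounds (R : realType) (z x : R) : 0 < z ->
  0 <= Num.min (x ^+ 2) (z ^+ 2) / z ^+ 2 <= 1.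
Proof.
move=> z0; have z2 : 0 < z ^+ 2 by exact: exprn_gt0.
apply/andP; split.
  apply: divr_ge0; last exact: ltW.
  by rewrite le_min sqr_ge0 ltW.
by rewrite ler_pdivrMr // mul1r ge_min lexx orbT.
Qed.

Lemma hfun_lip (R : realType) (t z : R) : 0 < t -> 0 < z -> lip1 (hfun t z) (t / z ^+ 2).
Proof.
move=> t0 z0; have z2 : 0 < z ^+ 2 by exact: exprn_gt0.
split; first by apply: divr_ge0; apply: ltW.
move=> x y; rewrite /hfun.
have /andP[hx _] := Y_bounds x z0; have /andP[hy _] := Y_bounds y z0.
apply: (le_trans (expN_lip _ _)); try by apply: mulr_ge0 => //; exact: ltW.
have := (sq_lip z).2 x y; rewrite mul1r => h.
set mx := Num.min (x ^+ 2) (z ^+ 2); set my := Num.min (y ^+ 2) (z ^+ 2).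
have -> : t * (mx / z ^+ 2) - t * (my / z ^+ 2) = t / z ^+ 2 * (mx - my) by ring.
have tz : 0 <= t / z ^+ 2 by apply: divr_ge0; apply: ltW.
rewrite normrM (ger0_norm tz) -mulrA; exact: ler_wpM2l.
Qed.

Lemma hfun_bounds (R : realType) (t z x : R) : 0 < t -> 0 < z ->
  expR (- t) <= hfun t z x <= 1.
Proof.
move=> t0 z0; have /andP[h0 h1] := Y_bounds x z0.
rewrite /hfun; apply/andP; split; rewrite ?ler_expR.
  rewrite lerN2 -[X in _ <= X]mulr1; apply: ler_wpM2l => //; exact: ltW.
rewrite -expR0 ler_expR oppr_le0; apply: mulr_ge0 => //; exact: ltW.
Qed.

Section SL6.
Variables (R : realType) (Omega : Type) (H : set (Omega -> R))
  (E : (Omega -> R) -> \bar R).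
Hypothesis SL : sublinear_space H E.

Lemma c_bound (X : Omega -> R) (z t eps V : R) : H X -> 0 < z -> 0 < t -> 0 < eps -> eps <= 1 ->
  t * eps ^+ 2 < 1 ->
  (capV H E [set w | (eps * z <= `|X w|)%R] <= V%:E)%E ->
  (E (fun w => hfun t z (X w)) <=
    (1 + (t - t ^+ 2 * eps ^+ 2) * (- (fine (Elow E (fun w => Num.min (X w ^+ 2) (z ^+ 2))) / z ^+ 2))
       + t ^+ 2 * V)%R%:E)%E.
Proof.
move=> HX z0 t0 e0 e1 te hV.
set A := [set w | eps * z <= `|X w|].
set m := fun w => Num.min (X w ^+ 2) (z ^+ 2).
set a := t - t ^+ 2 * eps ^+ 2.
have z2 : 0 < z ^+ 2 by exact: exprn_gt0.
have a0 : 0 < a by rewrite /a; nra.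
have Hm : H m := H_lip SL HX (sq_lip z).
have Hmn : H (fun w => - m w) := H_opp SL Hm.
have Hf : H (fun w => hfun t z (X w)) := H_lip SL HX (hfun_lip t0 z0).
have mb : forall w, 0 <= m w <= z ^+ 2.
  move=> w; rewrite /m le_min sqr_ge0 (ltW z2) /= ge_min lexx orbT //.
have fmn : E (fun w => - m w) \is a fin_num.
  apply: (E_bdd_fin SL (a := - z ^+ 2) (b := 0)) => // w.
  by have /andP[h1 h2] := mb w; apply/andP; split; lra.
have ff : E (fun w => hfun t z (X w)) \is a fin_num.
  exact: (E_bdd_fin SL (a := expR (- t)) (b := 1) Hf (fun w => hfun_bounds (X w) t0 z0)).
set em := fine (E (fun w => - m w)).
have Eem : E (fun w => - m w) = em%:E by rewrite fineK.
set g := fun w => 1 + a * ((z ^+ 2)^-1 * - m w).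
have Hg1 : H (fun w => a * ((z ^+ 2)^-1 * - m w)) by do 2 apply: (H_scale SL).
have Hg : H g by apply: (H_add SL) => //; exact: (Hcst SL).
have Eg1 : E (fun w => a * ((z ^+ 2)^-1 * - m w)) = (a * ((z ^+ 2)^-1 * em))%:E.
  rewrite (E_homog SL) // ?(E_homog SL) ?invr_gt0 //.
    transitivity (a%:E * ((z ^- 2)%:E * em%:E))%E; first by congr (_ * (_ * _))%E; exact: Eem.
    by rewrite -!EFinM.
  exact: (H_scale SL).
have Eg : (E g <= (1 + a * ((z ^+ 2)^-1 * em))%:E)%E.
  apply: le_trans (E_add_fin SL (Hcst SL 1) Hg1 _ _) _; rewrite ?(E_cst SL) ?Eg1 //.
have fg : E g \is a fin_num.
  apply: (E_bdd_fin SL (a := 1 - a) (b := 1)) => // w.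
  have /andP[h1 h2] := mb w.
  have hy1 : 0 <= (z ^+ 2)^-1 * m w <= 1.
    by rewrite mulrC; apply: Y_bounds.
  rewrite /g; move/andP: hy1 => [hy1 hy2]; apply/andP; split; nra.
have pw : forall w, hfun t z (X w) <= g w + t ^+ 2 * \1_A w.
  move=> w; rewrite /hfun /g.
  have /andP[y0 y1] := Y_bounds (X w) z0.
  have -> : 1 + a * ((z ^+ 2)^-1 * - m w) = 1 + a * (- (Num.min (X w ^+ 2) (z ^+ 2) / z ^+ 2)) by rewrite /m; ring.
  apply: pw_bound => //.
  rewrite indicE; have [wA|wA] := boolP (w \in A).
    have : 0 <= eps ^+ 2 * (Num.min (X w ^+ 2) (z ^+ 2) / z ^+ 2) by apply: mulr_ge0 => //; exact: sqr_ge0.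
    move=> h; rewrite /= !expr2; rewrite expr2 in h; nra.
  rewrite /= addr0.
  have wA' : `|X w| < eps * z.
    by rewrite ltNge; apply/negP => h; move/negP: wA; apply; rewrite in_setE.
  clear wA; rename wA' into wA.
  have hX : X w ^+ 2 <= (eps * z) ^+ 2.
    have sn : `|X w| ^+ 2 = X w ^+ 2 by rewrite real_normK ?num_real.
    rewrite -sn; have := normr_ge0 (X w); rewrite !expr2 => hn; nra.
  have hX2 : X w ^+ 2 <= z ^+ 2.
    apply: (le_trans hX); rewrite exprMn -[X in _ <= X]mul1r; apply: ler_wpM2r; first exact: ltW.
    rewrite expr2; nra.
  rewrite (min_l hX2).
  have hy : X w ^+ 2 / z ^+ 2 <= eps ^+ 2 by rewrite ler_pdivrMr // -exprMn.
  have hy0 : 0 <= X w ^+ 2 / z ^+ 2 by apply: divr_ge0; [exact: sqr_ge0| exact: ltW].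
  rewrite expr2; nra.
have := L_cap SL Hf Hg (exprn_gt0 2 t0) ff fg pw.
move=> h; apply: (le_trans h).
have hl : Elow E m = (- em)%:E by rewrite /Elow Eem.
rewrite hl /=.
move: Eg hV; rewrite fin_numE in fg; move: fg.
case: (E g) => // gv _; case: (capV H E A) => [cv||] //.
- rewrite !lee_fin => h1 h2.
  have : t ^+ 2 * cv <= t ^+ 2 * V by apply: ler_wpM2l => //; exact: sqr_ge0.
  have -> : a * - (- em / z ^+ 2) = a * ((z ^+ 2)^-1 * em) by ring.
  lra.
- move=> h1 _; rewrite mulrNy gtr0_sg ?exprn_gt0 // mul1e addeNy; exact: leNye.
Qed.

End SL6.

Section SL7.
Variables (R : realType) (Omega : Type) (H : set (Omega -> R))
  (E : (Omega -> R) -> \bar R).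
Hypothesis SL : sublinear_space H E.
Variable X : Omega -> R.
Hypothesis HX : H X.

Definition mfun (s : R) := fun w => Num.min (X w ^+ 2) (s ^+ 2).
Definition lfun (s : R) := fine (E (mfun s)).

Lemma m_bounds s w : 0 <= mfun s w <= s ^+ 2.
Proof. by rewrite /mfun le_min !sqr_ge0 /= ge_min lexx orbT. Qed.

Lemma Hmfun s : H (mfun s).
Proof. exact: (H_lip SL HX (sq_lip s)). Qed.

Lemma E_mfun s : E (mfun s) = (lfun s)%:E.
Proof.
rewrite /lfun fineK //; apply: (E_bdd_fin SL (a := 0) (b := s ^+ 2)) => //.
  exact: Hmfun.
exact: m_bounds.
Qed.

Lemma lfun_ge0 s : 0 <= lfun s.
Proof.
have := E_bdd SL (Hmfun s) (m_bounds s); rewrite E_mfun => /andP[h _].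
by rewrite lee_fin in h.
Qed.

Lemma lfun_mono s s' : 0 <= s -> s <= s' -> lfun s <= lfun s'.
Proof.
move=> s0 ss.
have h : (E (mfun s) <= E (mfun s'))%E.
  apply: (E_mono SL); [exact: Hmfun|exact: Hmfun|] => w.
  rewrite /mfun le_min !ge_min lexx /=; apply/orP; right.
  rewrite !expr2; apply: ler_pM => //; exact: le_trans ss.
by rewrite !E_mfun lee_fin in h.
Qed.

Lemma lfun_tail s eps V : 0 < s -> 0 < eps -> eps <= 1 ->
  (capV H E [set w | (eps * s <= `|X w|)%R] <= V%:E)%E ->
  lfun s <= (eps * s) ^+ 2 + s ^+ 2 * V.
Proof.
move=> s0 e0 e1 hV.
have s2 : 0 < s ^+ 2 by exact: exprn_gt0.
have pw : forall w, mfun s w <= (fun _ => (eps * s) ^+ 2) w + s ^+ 2 * \1_[set w | (eps * s <= `|X w|)%R] w.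
  move=> w /=; rewrite indicE; case: (boolP (w \in _)) => wA /=.
    rewrite mulr1; have /andP[_ h] := m_bounds s w.
    apply: (le_trans h); rewrite lerDr; exact: sqr_ge0.
  rewrite mulr0 addr0.
  have wA' : `|X w| < eps * s.
    by rewrite ltNge; apply/negP => h; move/negP: wA; apply; rewrite in_setE.
  rewrite /mfun ge_min; apply/orP; left.
  have sn : `|X w| ^+ 2 = X w ^+ 2 by rewrite real_normK ?num_real.
  rewrite -sn; have := normr_ge0 (X w); rewrite !expr2 => hn; nra.
have := L_cap SL (Hmfun s) (Hcst SL ((eps * s) ^+ 2)) s2 _ _ pw.
rewrite E_mfun (E_cst SL) => /(_ isT isT).
move: hV; case: (capV H E _) => [cv||] //.
- rewrite !lee_fin => h1 h2.
  apply: (le_trans h2); rewrite lerD2l; apply: ler_wpM2l => //; exact: ltW.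
- move=> _; rewrite mulrNy gtr0_sg // mul1e addeNy leeNy_eq => /eqP //.
Qed.

Definition lofun (s : R) := fine (Elow E (mfun s)).

Lemma Elow_mfun s : Elow E (mfun s) = (lofun s)%:E.
Proof.
rewrite /lofun fineK // /Elow fin_numN.
apply: (E_bdd_fin SL (a := - s ^+ 2) (b := 0)); first exact: (H_opp SL (Hmfun s)).
by move=> w; have /andP[h1 h2] := m_bounds s w; apply/andP; split; lra.
Qed.

Lemma lofun_le s : lofun s <= lfun s.
Proof.
have := Elow_le SL (Hmfun s) _ _; rewrite Elow_mfun E_mfun lee_fin; apply => //.
rewrite -fin_numN -/(Elow E (mfun s)) Elow_mfun //.
Qed.

Lemma II_fact (q x : R) : (0 < Elow E (mfun x))%E ->
  (E (mfun x) <= q%:E * Elow E (mfun x))%E ->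
  0 < lofun x /\ lfun x <= q * lofun x.
Proof.
rewrite Elow_mfun E_mfun lte_fin -EFinM lee_fin => h1 h2; by split.
Qed.

End SL7.
Theorem proposition4p3 (R : realType) (Omega : Type) (H : set (Omega -> R))
  (E : (Omega -> R) -> \bar R) (X : Omega -> R) (Xs : nat -> Omega -> R)
  (xs : nat -> R) (r : R) :
  sublinear_space H E ->
  H X -> (forall i, H (Xs i)) ->
  indep_seq H E Xs ->
  (forall i, ident_distr E (Xs i) X) ->
  E X = 0%E -> Elow E X = 0%E ->
  let l := fun x : R => fine (E (fun w => (Num.min (X w ^+ 2) (x ^+ 2))%R)) in
  (* (I) V(|X| >= x) = o(x^{-2} l(x)) *)
  (forall eps : R, 0 < eps -> \forall x \near +oo,
     (capV H E [set w | (x <= `|X w|)%R] <= (eps * (l x / x ^+ 2))%:E)%E) ->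
  (* (II) limsup_{x->oo} E[X^2 /\ x^2] / Elow[X^2 /\ x^2] < r^2 *)
  0 < r ->
  (exists q : R, q < r ^+ 2 /\ \forall x \near +oo,
     (0 < Elow E (fun w => (Num.min (X w ^+ 2) (x ^+ 2))%R))%E /\
     (E (fun w => (Num.min (X w ^+ 2) (x ^+ 2))%R)
        <= q%:E * Elow E (fun w => (Num.min (X w ^+ 2) (x ^+ 2))%R))%E) ->
  (* (III) E[(|X| - c)^+] -> 0 as c -> oo *)
  (E (fun w => (Num.max (`|X w| - c) 0)%R) @[c --> +oo] --> 0%E) ->
  (* (IV) x_n -> oo and x_n = o(sqrt n) *)
  (xs n @[n --> \oo] --> +oo) ->
  ((xs n / Num.sqrt n%:R) @[n --> \oo] --> 0) ->
  let b0 := inf [set x : R | 0 <= x /\ 0 < l x] in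
  let z := fun n : nat =>
    inf [set s : R | b0 + 1 <= s /\ l s / s ^+ 2 <= xs n ^+ 2 / n%:R] in
  forall delta : R, 0 < delta -> delta < r ^- 2 ->
  \forall n \near \oo,
    (capV H E [set w | (\sum_(i < n) Xs i w ^+ 2 <= delta * n%:R * l (z n))%R]
      <= (expR (- (2 * xs n ^+ 2)))%:E)%E.
Proof.
move=> SL HX HXs Hind Hid _ _ l HI r0 [q [hq HII]] _ hxs hxs2 b0 z delta d0 dr.
have lE : forall s, l s = lfun E X s by [].
have [X1 [_ HX1]] := HII.
set x0 := Num.max X1 0 + 1.
have hx0 : X1 < x0 by rewrite /x0 ltr_pwDr // le_max lexx.
have x00 : 0 < x0 by rewrite /x0 ltr_pwDr // le_max lexx orbT.
have [lo0 lq0] : 0 < lofun E X x0 /\ lfun E X x0 <= q * lofun E X x0.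
  by have [h1 h2] := HX1 x0 hx0; exact: (II_fact SL HX h1 h2).
have q0 : 0 < q.
  have := lofun_le SL HX x0 => h.
  by rewrite -(pmulr_lgt0 _ lo0); lra.
set gam := q^-1 - delta.
have gam0 : 0 < gam.
  have r2 : 0 < r ^+ 2 by exact: exprn_gt0.
  have : (r ^+ 2)^-1 < q^-1 by rewrite ltf_pV2 ?posrE.
  rewrite /gam; lra.
set t := 6 / gam.
have t0 : 0 < t by rewrite /t divr_gt0.
have tg : t * gam = 6 by rewrite /t mulrAC -mulrA divff ?gt_eqF // mulr1.
set eps := Num.min 1 (Num.min (q / t ^+ 2) (1 / (2 * t))).
have t20 : 0 < t ^+ 2 by exact: exprn_gt0.
have eps0 : 0 < eps by rewrite /eps !lt_min ltr01 divr_gt0 //= divr_gt0 // mulr_gt0.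
have eps1 : eps <= 1 by rewrite /eps ge_min lexx.
have epsq : eps <= q / t ^+ 2 by rewrite /eps !ge_min lexx orbT.
have epst : eps <= 1 / (2 * t) by rewrite /eps !ge_min lexx !orbT.
have te1 : t * eps ^+ 2 < 1.
  have h : t * eps <= 1 / 2.
    apply: (le_trans (ler_wpM2l (ltW t0) epst)).
    have -> : t * (1 / (2 * t)) = 1 / 2 by field; rewrite gt_eqF.
    by [].
  have : t * eps ^+ 2 <= t * eps by rewrite expr2 mulrA ler_piMr // mulr_ge0 // ltW.
  lra.
have teq : t ^+ 2 * eps ^+ 2 <= q.
  have : t ^+ 2 * eps <= q by rewrite mulrC -ler_pdivlMr.
  have : t ^+ 2 * eps ^+ 2 <= t ^+ 2 * eps by rewrite expr2 mulrA ler_piMr // mulr_ge0 // ltW.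
  lra.
set eta := eps ^+ 2 / t ^+ 2.
have eta0 : 0 < eta by rewrite /eta divr_gt0 // exprn_gt0.
have [X0 [_ HX0]] := HI eta eta0.
have Tx0 : [set x : R | 0 <= x /\ 0 < l x] x0.
  split; first exact: ltW.
  by rewrite lE; have := lofun_le SL HX x0; lra.
have b00 : 0 <= b0 by apply: lb_le_inf; [by exists x0| by move=> y [] ].
have [y [y0 ly0] yb] : exists2 y, [set x : R | 0 <= x /\ 0 < l x] y & y < b0 + 1.
  by apply: inf_lt; [exists x0 | rewrite ltrDl].
set P := l (b0 + 1).
have P0 : 0 < P.
  by apply: (lt_le_trans ly0); rewrite /P !lE; exact: (lfun_mono SL HX y0 (ltW yb)).
set M := Num.max (Num.max (X0 / eps + 1) (X1 + 1)) (Num.max (2 * (b0 + 1)) 1).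
have MX0 : X0 / eps < M by rewrite /M !lt_max ltrDl ltr01.
have MX1 : X1 < M by rewrite /M !lt_max ltrDl ltr01 orbT.
have Mb : 2 * (b0 + 1) <= M by rewrite /M !le_max lexx !orbT.
have M1 : 1 <= M by rewrite /M !le_max lexx !orbT.
have M0 : 0 < M by exact: (lt_le_trans ltr01 M1).
set rho := Num.min 1 (P / M ^+ 2).
have rho0 : 0 < rho by rewrite /rho lt_min ltr01 divr_gt0 // exprn_gt0.
have rho1 : rho <= 1 by rewrite /rho ge_min lexx.
have rhoP : rho <= P / M ^+ 2 by rewrite /rho ge_min lexx orbT.
have E1 : \forall n \near \oo, 0 < xs n by move/cvgryPgt : hxs; apply.
have E2 : \forall n \near \oo, `|xs n / Num.sqrt n%:R| < rho by exact: (cvgr0_norm_lt _ hxs2 _ rho0).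
have E3 : \forall n \near \oo, (0 < n)%N by exists 1%N.
apply: filterS3 E1 E2 E3 => n xn0 xnr n0.
set th := xs n ^+ 2 / n%:R.
have nR0 : 0 < n%:R :> R by rewrite ltr0n.
have th0 : 0 < th by rewrite /th divr_gt0 // exprn_gt0.
have thP : th < P / M ^+ 2.
  have e : th = `|xs n / Num.sqrt n%:R| ^+ 2.
    by rewrite real_normK ?num_real // expr_div_n sqr_sqrtr // ltW.
  have : `|xs n / Num.sqrt n%:R| ^+ 2 < rho ^+ 2.
    by rewrite ltr_pXn2r // ?nnegrE ?normr_ge0 // ltW.
  have : rho ^+ 2 <= rho by rewrite expr2 ler_piMr // ltW.
  lra.
set S := [set s : R | b0 + 1 <= s /\ l s / s ^+ 2 <= th].
have zS : z n = inf S by [].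
have SA : S !=set0.
  set e' := Num.min 1 (th / 2).
  have e'0 : 0 < e' by rewrite /e' lt_min ltr01 divr_gt0.
  have e'1 : e' <= 1 by rewrite /e' ge_min lexx.
  have e'th : e' <= th / 2 by rewrite /e' ge_min lexx orbT.
  set et := e' ^+ 2 / 2.
  have et0 : 0 < et by rewrite /et divr_gt0 // exprn_gt0.
  have [Y0 [_ HY0]] := HI et et0.
  set s := Num.max (Y0 / e' + 1) (b0 + 1).
  have sY : Y0 / e' < s by rewrite /s lt_max ltrDl ltr01.
  have sb : b0 + 1 <= s by rewrite /s le_max lexx orbT.
  have s0 : 0 < s by apply: lt_le_trans sb; rewrite ltr_pwDr.
  exists s; split => //.
  have hc := HY0 (e' * s) ltac:(by rewrite mulrC -ltr_pdivrMr).
  have ht := lfun_tail SL HX s0 e'0 e'1 hc.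
  have hm : l (e' * s) <= l s.
    rewrite !lE; apply: (lfun_mono SL HX); first by apply: mulr_ge0; apply: ltW.
    by rewrite ler_piMl // ltW.
  have es0 : 0 < e' * s by apply: mulr_gt0.
  have e2 : s ^+ 2 * (et * (l (e' * s) / (e' * s) ^+ 2)) = l (e' * s) / 2.
    rewrite /et; field; rewrite ?gt_eqF //.
  rewrite e2 -lE in ht.
  have s20 : 0 < s ^+ 2 by exact: exprn_gt0.
  rewrite ler_pdivrMr //.
  have : e' ^+ 2 <= e' by rewrite expr2 ler_piMr // ltW.
  have : l s <= 2 * e' ^+ 2 * s ^+ 2 by rewrite exprMn in ht; lra.
  move=> h1 h2; apply: (le_trans h1); apply: ler_wpM2r; [exact: ltW|lra].
have Slb : has_lbound S by exists (b0 + 1) => s [].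
have zM : M <= z n.
  rewrite zS; apply: lb_le_inf => // s [sb hs].
  rewrite leNgt; apply/negP => sM.
  have s0 : 0 < s by apply: lt_le_trans sb; rewrite ltr_pwDr.
  have hl : P <= l s by rewrite /P !lE; apply: (lfun_mono SL HX) => //; lra.
  have s2 : s ^+ 2 < M ^+ 2 by rewrite ltr_pXn2r // ?nnegrE ltW.
  have s20 : 0 < s ^+ 2 by exact: exprn_gt0.
  have : P / M ^+ 2 < l s / s ^+ 2.
    apply: (lt_le_trans (y := P / s ^+ 2)).
      by rewrite ltr_pM2l // ltf_pV2 ?posrE // exprn_gt0.
    by apply: ler_wpM2r => //; rewrite invr_ge0 ltW.
  lra.
set Z := z n.
have Z0 : 0 < Z by apply: lt_le_trans zM.
have Z20 : 0 < Z ^+ 2 by exact: exprn_gt0.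
set p := l Z / Z ^+ 2.
have thp : th <= 2 * p.
  set s := 3 / 4 * Z.
  have s0 : 0 < s by rewrite /s mulr_gt0 // divr_gt0.
  have sZ : s < Z by rewrite /s; lra.
  have sb : b0 + 1 <= s by rewrite /s; lra.
  have nS : ~ S s.
    move=> Ss; have := ge_inf Slb Ss; rewrite -zS -/Z; lra.
  have hs : th < l s / s ^+ 2.
    rewrite ltNge; apply/negP => h; apply: nS; split => //.
  have hl : l s <= l Z by rewrite !lE; apply: (lfun_mono SL HX) => //; lra.
  have e : l s / s ^+ 2 = 16 / 9 * (l s / Z ^+ 2) by rewrite /s; field; rewrite gt_eqF.
  rewrite e in hs.
  have : l s / Z ^+ 2 <= p by apply: ler_wpM2r => //; rewrite invr_ge0 ltW.
  have : 0 <= l s / Z ^+ 2 by apply: divr_ge0; [rewrite lE; exact: (lfun_ge0 SL HX)| exact: ltW].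
  lra.
have ZX1 : X1 < Z by exact: (lt_le_trans MX1 zM).
have [loZ0 lqZ] : 0 < lofun E X Z /\ lfun E X Z <= q * lofun E X Z.
  by have [h1 h2] := HX1 Z ZX1; exact: (II_fact SL HX h1 h2).
have ZX0 : X0 < eps * Z.
  by rewrite mulrC -ltr_pdivrMr //; exact: (lt_le_trans MX0 zM).
have hcap := HX0 (eps * Z) ZX0.
set V := eta * (l (eps * Z) / (eps * Z) ^+ 2).
have hc := c_bound SL HX Z0 t0 eps0 eps1 te1 hcap.
rewrite -/V in hc.
have loE : fine (Elow E (fun w => Num.min (X w ^+ 2) (Z ^+ 2))) = lofun E X Z by [].
rewrite loE in hc.
set a := t - t ^+ 2 * eps ^+ 2.
have a0 : 0 < a by rewrite /a; nra.
have Hh : H (fun w => hfun t Z (X w)) := H_lip SL HX (hfun_lip t0 Z0).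
have fc : E (fun w => hfun t Z (X w)) \is a fin_num.
  exact: (E_bdd_fin SL (a := expR (- t)) (b := 1) Hh (fun w => hfun_bounds (X w) t0 Z0)).
set c := fine (E (fun w => hfun t Z (X w))).
have Ec : E (fun w => hfun t Z (X w)) = c%:E by rewrite fineK.
have cge : expR (- t) <= c.
  have := E_bdd SL Hh (fun w => hfun_bounds (X w) t0 Z0).
  by rewrite Ec => /andP[h _]; rewrite lee_fin in h.
have c0 : 0 < c by apply: lt_le_trans cge; exact: expR_gt0.
rewrite Ec lee_fin in hc.
have h1 : a * (p / q) <= a * (lofun E X Z / Z ^+ 2).
  apply: ler_wpM2l; first exact: ltW.
  rewrite /p mulrAC; apply: ler_wpM2r; first by rewrite invr_ge0 ltW.
  by rewrite ler_pdivrMr // mulrC.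
have h2 : t ^+ 2 * V <= p.
  have -> : t ^+ 2 * V = l (eps * Z) / Z ^+ 2.
    by rewrite /V /eta; field; rewrite ?gt_eqF.
  rewrite /p; apply: ler_wpM2r; first by rewrite invr_ge0 ltW.
  rewrite !lE; apply: (lfun_mono SL HX); first by rewrite mulr_ge0 // ltW.
  by rewrite ler_piMl // ltW.
set kap := a / q - 1.
have cle : c <= expR (- (kap * p)).
  apply: le_trans (expR_ge1Dx _).
  have -> : 1 + - (kap * p) = 1 - a * (p / q) + p by rewrite /kap; field; rewrite gt_eqF.
  rewrite mulrN -/a in hc; lra.
have hpos : forall x, 0 < hfun t Z x by move=> x; exact: expR_gt0.
have hnorm : forall x, `|hfun t Z x| <= 1.
  by move=> x; rewrite ger0_norm ?(ltW (hpos x)) //; have /andP[_ ->] := hfun_bounds x t0 Z0.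
have HF : H (fun w => \prod_(i < n) hfun t Z (Xs i w)).
  exact: (@H_G R Omega H E SL n (fun i : 'I_n => Xs i) (hfun t Z) (t / Z ^+ 2) (fun i => HXs i)
    (hfun_lip t0 Z0) hnorm).
have hid : forall i, E (fun w => hfun t Z (Xs i w)) = c%:E.
  move=> i; rewrite -Ec; exact: (Hid i (hfun t Z) (lip1_locLip (hfun_lip t0 Z0))).
have EF := E_prod SL HXs Hind (hfun_lip t0 Z0) hnorm hpos c0 hid n.
set A := [set w | (\sum_(i < n) Xs i w ^+ 2 <= delta * n%:R * l Z)%R].
set C := expR (t * delta * n%:R * p).
have C0 : 0 < C by exact: expR_gt0.
set xi := fun w => C * \prod_(i < n) hfun t Z (Xs i w).
have Hxi : H xi by apply: (H_scale SL).
have Exi : E xi = (C * c ^+ n)%:E by rewrite /xi (E_homog SL) // EF -EFinM.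
have capxi : (capV H E A <= E xi)%E.
  apply: ereal_inf_lbound; exists xi => //; split => // w.
  rewrite indicE; case: (boolP (w \in A)) => wA /=; last first.
    by rewrite /xi; apply: mulr_ge0; [exact: ltW | apply: prodr_ge0 => i _; exact: ltW].
  have wA' : \sum_(i < n) Xs i w ^+ 2 <= delta * n%:R * l Z by move: wA; rewrite in_setE.
  rewrite /xi /C /hfun -expR_sum -expRD.
  apply: le_trans (expR_ge1Dx _); rewrite lerDl.
  have hY : \sum_(i < n) (Num.min (Xs i w ^+ 2) (Z ^+ 2) / Z ^+ 2) <= delta * n%:R * p.
    have hY1 : \sum_(i < n) (Num.min (Xs i w ^+ 2) (Z ^+ 2) / Z ^+ 2) <= \sum_(i < n) (Xs i w ^+ 2 / Z ^+ 2).
      apply: ler_sum => i _; apply: ler_wpM2r; first by rewrite invr_ge0 ltW.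
      by rewrite ge_min lexx.
    apply: (le_trans hY1).
    rewrite -mulr_suml /p mulrA; apply: ler_wpM2r => //; by rewrite invr_ge0 ltW.
  rewrite sumrN -mulr_sumr.
  have : t * (\sum_(i < n) (Num.min (Xs i w ^+ 2) (Z ^+ 2) / Z ^+ 2)) <= t * (delta * n%:R * p).
    by apply: ler_wpM2l => //; exact: ltW.
  rewrite !mulrA => h; rewrite subr_ge0; exact: h.
apply: (le_trans capxi); rewrite Exi lee_fin.
have cn : c ^+ n <= expR (n%:R * - (kap * p)).
  by rewrite expRM_natl; apply: lerXn2r; rewrite ?nnegrE ?(ltW c0) ?expR_ge0.
have k4 : 4 <= kap - t * delta.
  have e : kap - t * delta = t * gam - t ^+ 2 * eps ^+ 2 / q - 1.
    by rewrite /kap /a /gam; field; rewrite gt_eqF.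
  have : t ^+ 2 * eps ^+ 2 / q <= 1 by rewrite ler_pdivrMr // mul1r.
  rewrite e tg; lra.
have np : xs n ^+ 2 <= 2 * (n%:R * p).
  have : xs n ^+ 2 = n%:R * th by rewrite /th mulrC divfK // gt_eqF.
  have : n%:R * th <= n%:R * (2 * p) by apply: ler_wpM2l => //; exact: ltW.
  lra.
have p0 : 0 <= n%:R * p by apply: mulr_ge0; [exact: ltW| lra].
apply: (le_trans (ler_wpM2l (ltW C0) cn)).
rewrite /C -expRD ler_expR.
have : (n%:R * p) * 4 <= (n%:R * p) * (kap - t * delta) by apply: ler_wpM2l.
have -> : t * delta * n%:R * p + n%:R * - (kap * p) = - ((n%:R * p) * (kap - t * delta)) by ring.
lra.
Qed.
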